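(* Let $t\ge 1$ be an integer and $n=2(t+1)^2$. For each $0\le i\le t$, let $\mathcal{C}_i\subseteq\mathbb{Z}_n^2$ be the linear code generated by the rows of \[ G_i=\begin{bmatrix} t+1+i & t+1-i\\ i & 2(t+1)-i\end{bmatrix}. \] Then every translate $\mathbf{x}+\mathcal{C}_i$ ($\mathbf{x}\in\mathbb{Z}_n^2$) is a $(2t+1)$-diameter perfect code with minimum distance $2t+2$ and anticode $\mathcal{A}_{2t+1}$.
   Context: $\mathbb{Z}_n$ is the ring of integers modulo $n$. A code of length $m$ is a subset of $\mathbb{Z}_n^m$; it is linear if it is a submodule, and the code generated by a matrix is the submodule spanned by its rows. The Lee weight of $\mathbf{u}=(u_1,\dots,u_m)\in\mathbb{Z}_n^m$ is $\mathrm{wt}_L(\mathbf{u})=\sum_i\min\{u_i,n-u_i\}$ (with $u_i$ represented in $\{0,\dots,n-1\}$), and the Lee distance is $d_L(\mathbf{u},\mathbf{v})=\mathrm{wt}_L(\mathbf{u}-\mathbf{v})$; all distances are Lee distances. The minimum distance of a code is the minimum Lee distance between distinct codewords. A translate of $\mathcal{C}$ by $\mathbf{x}$ is $\mathbf{x}+\mathcal{C}=\{\mathbf{x}+\mathbf{c}:\mathbf{c}\in\mathcal{C}\}$. An anticode of diameter $D$ is a subset in which the maximum distance between two elements is $D$. For an adjacent pair $\{p_1,p_2\}$ of points (Lee distance $1$) and $2t+1\le n$, $\mathcal{A}_{2t+1}$ denotes the set of all points at distance at most $t$ from $\{p_1,p_2\}$ (i.e. from $p_1$ or from $p_2$); $\{p_1,p_2\}$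 is its core. Code–anticode bound: if $\mathcal{C}$ has minimum distance $d$ and $\mathcal{A}$ is an anticode of diameter $D=d-1$, then $|\mathcal{C}|\cdot|\mathcal{A}|\le|\mathbb{Z}_n^m|$; a code attaining equality (with $\mathcal{A}$ an anticode of maximum size for diameter $D$) is called a $D$-diameter perfect code (with anticode $\mathcal{A}$). *)

(* Defs.v *)
From HB Require Import structures.
From mathcomp Require Import all_boot all_order all_algebra.
Set Implicit Arguments. Unset Strict Implicit. Unset Printing Implicit Defensive.
Import Order.TTheory GRing.Theory Num.Theory.
Local Open Scope ring_scope.

(* Lee weight of a : Z_n, with a represented in {0,...,n-1} (needs 1 < n). *)
Definition leeZ (n : nat) (a : 'Z_n) : nat := minn (a : nat) (n - a)%N.

Definition lee_wt (n m : nat) (u : 'rV['Z_n]_m) : nat :=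
  (\sum_(j < m) leeZ (u ord0 j))%N.

Definition lee_dist (n m : nat) (u v : 'rV['Z_n]_m) : nat := lee_wt (u - v).

Definition lin_code (n k m : nat) (G : 'M['Z_n]_(k, m)) : {set 'rV['Z_n]_m} :=
  [set u *m G | u : 'rV['Z_n]_k].

Definition translate (n m : nat) (x : 'rV['Z_n]_m) (C : {set 'rV['Z_n]_m}) :
  {set 'rV['Z_n]_m} := [set x + c | c in C].

Definition has_min_dist (n m : nat) (C : {set 'rV['Z_n]_m}) (d : nat) : Prop :=
  (exists c1, exists c2, [/\ c1 \in C, c2 \in C, c1 != c2 & lee_dist c1 c2 = d])
  /\ (forall c1 c2, c1 \in C -> c2 \in C -> c1 != c2 -> (d <= lee_dist c1 c2)%N).

Definition diam_le (n m : nat) (A : {set 'rV['Z_n]_m}) (D : nat) : Prop :=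
  forall a b, a \in A -> b \in A -> (lee_dist a b <= D)%N.

Definition anticode_of_diam (n m : nat) (A : {set 'rV['Z_n]_m}) (D : nat) : Prop :=
  diam_le A D /\ exists a, exists b, [/\ a \in A, b \in A & lee_dist a b = D].

Definition anticodeA (n m : nat) (t : nat) (p1 p2 : 'rV['Z_n]_m) : {set 'rV['Z_n]_m} :=
  [set x | (lee_dist x p1 <= t)%N || (lee_dist x p2 <= t)%N].

Definition diameter_perfect (n m : nat) (C : {set 'rV['Z_n]_m}) (D : nat)
    (A : {set 'rV['Z_n]_m}) : Prop :=
  [/\ has_min_dist C D.+1,
      anticode_of_diam A D,
      (forall B : {set 'rV['Z_n]_m}, diam_le B D -> #|B| <= #|A|)%N
    & (#|C| * #|A| = #|[set: 'rV['Z_n]_m]|)%N].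

Definition Gmat (n t i : nat) : 'M['Z_n]_2 :=
  \matrix_(r < 2, c < 2)
    ((if (r : nat) == 0%N then
        (if (c : nat) == 0%N then (t + 1 + i)%N else (t + 1 - i)%N)
      else
        (if (c : nat) == 0%N then i else (2 * (t + 1) - i)%N))%:R : 'Z_n).

(* Main.v *)
Require Import Defs.
From HB Require Import structures.
From mathcomp Require Import all_boot all_order all_algebra.
From mathcomp Require Import zify ring.

Module Helpers.
Set Implicit Arguments. Unset Strict Implicit. Unset Printing Implicit Defensive.
Import Order.TTheory GRing.Theory Num.Theory.
Local Open Scope ring_scope.

Lemma valZn_lt (n : nat) (Hn : (1 < n)%N) (z : 'Z_n) : ((z : nat) < n)%N.
Proof. have := ltn_ord z; move: (z : nat) => v; by rewrite Zp_cast. Qed.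

Definition rep (n : nat) (z : 'Z_n) : int :=
  if (2 * (z : nat) <= n)%N then (z : nat)%:Z else (z : nat)%:Z - n%:Z.

Lemma repK (n : nat) (Hn : (1 < n)%N) (z : 'Z_n) : (rep z)%:~R = z.
Proof.
rewrite /rep; case: ifP => _.
  by rewrite -[(Posz _)%:~R]/((z : nat)%:R) natr_Zp.
by rewrite intrB -[(Posz (z : nat))%:~R]/((z : nat)%:R) -[(Posz n)%:~R]/(n%:R) natr_Zp pchar_Zp // subr0.
Qed.

Lemma leeZ_rep (n : nat) (Hn : (1 < n)%N) (z : 'Z_n) : leeZ z = absz (rep z).
Proof.
have := valZn_lt Hn z; rewrite /leeZ /rep; case: ifP => h hz; lia.
Qed.

Lemma rep_bound (n : nat) (Hn : (1 < n)%N) (z : 'Z_n) : (2 * absz (rep z) <= n)%N.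
Proof.
have := valZn_lt Hn z; rewrite /rep; case: ifP => h hz; lia.
Qed.

Lemma intr_Zn_eq0 (n : nat) (Hn : (1 < n)%N) (k : int) :
  (k%:~R : 'Z_n) = 0 -> exists q : int, k = q * n%:Z.
Proof.
have H (a : nat) : (a%:R : 'Z_n) = 0 -> exists q : int, a%:Z = q * n%:Z.
  move=> /(congr1 (@nat_of_ord _)); rewrite val_Zp_nat //= => /eqP.
  by case/dvdnP=> q ->; exists q%:Z; rewrite PoszM.
case: k => [a|a].
  by move/H.
rewrite NegzE intrN => /eqP; rewrite oppr_eq0 => /eqP /H [q hq].
by exists (- q); rewrite hq mulNr.
Qed.

Lemma intr_Zn_eq (n : nat) (Hn : (1 < n)%N) (k l : int) :
  (k%:~R : 'Z_n) = l%:~R -> exists q : int, k - l = q * n%:Z.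
Proof. by move=> h; apply: intr_Zn_eq0 => //; rewrite intrB h subrr. Qed.

Lemma intr_Zn_mul0 (n : nat) (Hn : (1 < n)%N) (q : int) : ((q * n%:Z)%:~R : 'Z_n) = 0.
Proof. by rewrite intrM -[(Posz n)%:~R]/(n%:R) pchar_Zp // mulr0. Qed.

Lemma leeZ_intr_le (n : nat) (Hn : (1 < n)%N) (k : int) :
  (leeZ (k%:~R : 'Z_n) <= absz k)%N.
Proof.
set z := (k%:~R : 'Z_n).
have hb := rep_bound Hn z; rewrite leeZ_rep //.
have [q hq] := intr_Zn_eq Hn (repK Hn z).
have: (q = 0) \/ (1 <= q) \/ (q <= -1) by lia.
case=> [hq0|[h1|h1]]; nia.
Qed.

Lemma leeZ_intr_eq (n : nat) (Hn : (1 < n)%N) (k : int) :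
  (2 * absz k <= n)%N -> leeZ (k%:~R : 'Z_n) = absz k.
Proof.
move=> hk.
set z := (k%:~R : 'Z_n).
have hb := rep_bound Hn z; rewrite leeZ_rep //.
have [q hq] := intr_Zn_eq Hn (repK Hn z).
have: (q = 0) \/ (q = 1) \/ (q = -1) \/ (2 <= q) \/ (q <= -2) by lia.
case=> [hq0|[h1|[h1|[h1|h1]]]]; nia.
Qed.

Definition i1 : 'I_2 := lift ord0 ord0.

Definition vecZ (n : nat) (a b : int) : 'rV['Z_n]_2 :=
  \row_(j < 2) (if (j : nat) == 0%N then a%:~R else b%:~R).

Lemma vecZ0 n a b : vecZ n a b ord0 ord0 = a%:~R.
Proof. by rewrite mxE. Qed.
Lemma vecZ1 n a b : vecZ n a b ord0 i1 = b%:~R.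
Proof. by rewrite mxE. Qed.

Lemma row2P n (u v : 'rV['Z_n]_2) :
  u ord0 ord0 = v ord0 ord0 -> u ord0 i1 = v ord0 i1 -> u = v.
Proof.
move=> h0 h1; apply/rowP => j.
case: j => [[|[|k]] hk].
- by rewrite (_ : Ordinal hk = ord0) //; apply: val_inj.
- by rewrite (_ : Ordinal hk = i1) //; apply: val_inj.
- by [].
Qed.

Lemma vecZD n a b c d : vecZ n a b + vecZ n c d = vecZ n (a + c) (b + d).
Proof. by apply: row2P; rewrite !mxE /= intrD. Qed.
Lemma vecZN n a b : - vecZ n a b = vecZ n (- a) (- b).
Proof. by apply: row2P; rewrite !mxE /= intrN. Qed.
Lemma vecZB n a b c d : vecZ n a b - vecZ n c d = vecZ n (a - c) (b - d).
Proof. by rewrite vecZN vecZD. Qed.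

Lemma vec_eta n (Hn : (1 < n)%N) (u : 'rV['Z_n]_2) :
  u = vecZ n (rep (u ord0 ord0)) (rep (u ord0 i1)).
Proof. by apply: row2P; rewrite !mxE /= repK. Qed.

Lemma lee_wt2 n (u : 'rV['Z_n]_2) :
  lee_wt u = (leeZ (u ord0 ord0) + leeZ (u ord0 i1))%N.
Proof. by rewrite /lee_wt big_ord_recl big_ord1. Qed.

Lemma wt_vecZ_le n (Hn : (1 < n)%N) a b : (lee_wt (vecZ n a b) <= absz a + absz b)%N.
Proof. by rewrite lee_wt2 vecZ0 vecZ1 leq_add // leeZ_intr_le. Qed.

Lemma wt_vecZ_eq n (Hn : (1 < n)%N) a b : (2 * absz a <= n)%N -> (2 * absz b <= n)%N ->
  lee_wt (vecZ n a b) = (absz a + absz b)%N.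
Proof. by move=> ha hb; rewrite lee_wt2 vecZ0 vecZ1 !leeZ_intr_eq. Qed.

Lemma wt_rep n (Hn : (1 < n)%N) (u : 'rV['Z_n]_2) :
  lee_wt u = (absz (rep (u ord0 ord0)) + absz (rep (u ord0 i1)))%N.
Proof. by rewrite lee_wt2 !leeZ_rep. Qed.

Lemma wt_triangle n (Hn : (1 < n)%N) (u v : 'rV['Z_n]_2) :
  (lee_wt (u + v) <= lee_wt u + lee_wt v)%N.
Proof.
rewrite {1}(vec_eta Hn u) {1}(vec_eta Hn v) vecZD.
apply: leq_trans (wt_vecZ_le Hn _ _) _.
rewrite (wt_rep Hn u) (wt_rep Hn v).
lia.
Qed.

Lemma wt_opp n (Hn : (1 < n)%N) (u : 'rV['Z_n]_2) : lee_wt (- u) = lee_wt u.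
Proof.
have h0 := rep_bound Hn (u ord0 ord0); have h1 := rep_bound Hn (u ord0 i1).
rewrite {1}(vec_eta Hn u) vecZN wt_vecZ_eq ?(wt_rep Hn u); lia.
Qed.

Lemma wt_eq0 n (Hn : (1 < n)%N) (u : 'rV['Z_n]_2) : lee_wt u = 0%N -> u = 0.
Proof.
rewrite (wt_rep Hn u) => h.
rewrite (vec_eta Hn u); apply: row2P; rewrite !mxE /=.
by have -> : rep (u ord0 ord0) = 0 by lia.
by have -> : rep (u ord0 i1) = 0 by lia.
Qed.

Lemma dist_sym n (Hn : (1 < n)%N) (u v : 'rV['Z_n]_2) : lee_dist u v = lee_dist v u.
Proof. by rewrite /lee_dist -wt_opp // opprB. Qed.

Lemma dist_tri n (Hn : (1 < n)%N) (u v w : 'rV['Z_n]_2) :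
  (lee_dist u w <= lee_dist u v + lee_dist v w)%N.
Proof.
by rewrite /lee_dist; apply: leq_trans (wt_triangle Hn _ _); rewrite addrA subrK.
Qed.

Lemma vecZ_eq n (Hn : (1 < n)%N) a b c d : vecZ n a b = vecZ n c d ->
  exists q1 q2 : int, a - c = q1 * n%:Z /\ b - d = q2 * n%:Z.
Proof.
move=> h.
have h0 := congr1 (fun u : 'rV['Z_n]_2 => u ord0 ord0) h.
have h1 := congr1 (fun u : 'rV['Z_n]_2 => u ord0 i1) h.
move: h0 h1; rewrite /= !vecZ0 !vecZ1 => h0 h1.
have [q1 ->] := intr_Zn_eq Hn h0.
by have [q2 ->] := intr_Zn_eq Hn h1; exists q1, q2.
Qed.

Lemma small_mul (d k : int) : 0 < d -> `|d * k| < d -> k = 0.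
Proof. move=> ? ?; nia. Qed.

Lemma arith_min (m i A B x y q1 q2 : int) : 1 <= m -> 0 <= i -> i < m ->
  x - (A * (m + i) + B * i) = q1 * (2 * m * m) ->
  y - (A * (m - i) + B * (2 * m - i)) = q2 * (2 * m * m) ->
  `|x| + `|y| < 2 * m -> x = 0 /\ y = 0.
Proof.
move=> hm hi0 hi ex ey hxy.
have hs : x + y = (2 * m) * (A + B + (q1 + q2) * m) by lia.
have k0 : A + B + (q1 + q2) * m = 0.
  apply: (@small_mul (2 * m)); first lia.
  rewrite -hs; lia.
have hA : A = - B - (q1 + q2) * m by lia.
subst A.
have hd : x - y = m * (2 * (- i * (q1 + q2) - B + (q1 - q2) * m)) by lia.
have hx : x = m * (- i * (q1 + q2) - B + (q1 - q2) * m) by lia.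
have l0 : (- i * (q1 + q2) - B + (q1 - q2) * m) = 0.
  apply: (@small_mul m); first lia.
  rewrite -hx; lia.
lia.
Qed.

Lemma arith_injC (m i a b a' b' q1 q2 : int) : 1 <= m -> 0 <= i -> i < m ->
  0 <= a < m -> 0 <= a' < m -> 0 <= b < 2 * m -> 0 <= b' < 2 * m ->
  (a * (m + i) - b * m) - (a' * (m + i) - b' * m) = q1 * (2 * m * m) ->
  (a * (m - i) + b * m) - (a' * (m - i) + b' * m) = q2 * (2 * m * m) ->
  a = a' /\ b = b'.
Proof.
move=> hm hi0 hi ha ha' hb hb' e1 e2.
have hs : (2 * m) * (a - a') = (2 * m) * ((q1 + q2) * m) by lia.
have hs' : a - a' = m * (q1 + q2).
  by move/(mulfI _): hs => ->; [lia | rewrite mulrC; lia].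
have q0 : q1 + q2 = 0 by apply: (@small_mul m); lia.
have ea : a = a' by apply/eqP; rewrite -subr_eq0 hs' q0 mulr0.
subst a'.
have hb1 : m * (b - b') = m * (m * (- 2 * q1)) by lia.
have hb2 : b - b' = m * (- 2 * q1).
  by move/(mulfI _): hb1 => ->; lia.
have : - q1 = 0 by apply: (@small_mul (2 * m)); lia.
lia.
Qed.

Lemma code_vecZ n t i a b :
  vecZ n a b *m Gmat n t i =
  vecZ n (a * (t + 1 + i)%N%:Z + b * i%:Z)
         (a * (t + 1 - i)%N%:Z + b * (2 * (t + 1) - i)%N%:Z).
Proof.
apply: row2P; rewrite !mxE big_ord_recl big_ord1 !mxE /= !intrD !intrM //.
Qed.

Lemma in_T n (x c : 'rV['Z_n]_2) (G : 'M['Z_n]_2) :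
  c \in translate x (lin_code G) -> exists u, c = x + u *m G.
Proof.
by case/imsetP=> c0 /imsetP [u _ ->] ->; exists u.
Qed.

Lemma T_in n (x : 'rV['Z_n]_2) (G : 'M['Z_n]_2) u :
  x + u *m G \in translate x (lin_code G).
Proof. by apply/imsetP; exists (u *m G) => //; apply/imsetP; exists u. Qed.

Lemma wt0 n (Hn : (1 < n)%N) : lee_wt (0 : 'rV['Z_n]_2) = 0%N.
Proof.
have -> : (0 : 'rV['Z_n]_2) = vecZ n 0 0 by apply: row2P; rewrite !mxE.
by rewrite wt_vecZ_eq.
Qed.

Lemma T_mindist n t i (Hn : n = (2 * (t + 1) ^ 2)%N) (ht : (1 <= t)%N) (hi : (i <= t)%N)
  (x c1 c2 : 'rV['Z_n]_2) :
  c1 \in translate x (lin_code (Gmat n t i)) -> c2 \in translate x (lin_code (Gmat n t i)) ->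
  c1 != c2 -> (2 * t + 1 < lee_dist c1 c2)%N.
Proof.
have Hn1 : (1 < n)%N by rewrite Hn; nia.
have hnZ : n%:Z = 2 * (t + 1)%:Z * (t + 1)%:Z by rewrite Hn; lia.
move=> /in_T [u1 ->] /in_T [u2 ->] hne.
rewrite /lee_dist opprD addrACA subrr add0r -mulmxBl.
rewrite (vec_eta Hn1 (u1 - u2)) code_vecZ.
set P := (X in vecZ n X _); set Q := (X in vecZ n _ X).
set d := vecZ n P Q.
rewrite (wt_rep Hn1 d).
have [q1 h1] := intr_Zn_eq Hn1 (etrans (repK Hn1 (d ord0 ord0)) (vecZ0 n P Q)).
have [q2 h2] := intr_Zn_eq Hn1 (etrans (repK Hn1 (d ord0 i1)) (vecZ1 n P Q)).
rewrite ltnNge; apply/negP => hle.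
have [] := @arith_min (t + 1)%:Z i%:Z (rep ((u1 - u2) ord0 ord0)) (rep ((u1 - u2) ord0 i1))
   (rep (d ord0 ord0)) (rep (d ord0 i1)) q1 q2.
- lia.
- lia.
- lia.
- move: h1; rewrite hnZ /P; clearbody d; move: (rep (d ord0 ord0)) (rep ((u1 - u2) ord0 ord0)) (rep ((u1 - u2) ord0 i1)) => r a b; lia.
- move: h2; rewrite hnZ /Q; clearbody d; move: (rep (d ord0 i1)) (rep ((u1 - u2) ord0 ord0)) (rep ((u1 - u2) ord0 i1)) => r a b; lia.
- lia.
move=> e0 e1; move/eqP: hne; apply.
apply/eqP; rewrite -subr_eq0 opprD addrACA subrr add0r -mulmxBl; apply/eqP.
rewrite (vec_eta Hn1 (u1 - u2)) code_vecZ -/P -/Q -/d.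
rewrite (vec_eta Hn1 d) e0 e1.
by have -> : vecZ n 0 0 = 0 by apply: row2P; rewrite !mxE.
Qed.

Lemma dist_self n (Hn : (1 < n)%N) (c : 'rV['Z_n]_2) : lee_dist c c = 0%N.
Proof. by rewrite /lee_dist subrr wt0. Qed.

Lemma T_pair n t i (Hn : n = (2 * (t + 1) ^ 2)%N) (ht : (1 <= t)%N) (hi : (i <= t)%N)
  (x : 'rV['Z_n]_2) :
  exists c1 c2, [/\ c1 \in translate x (lin_code (Gmat n t i)),
    c2 \in translate x (lin_code (Gmat n t i)), c1 != c2 & lee_dist c1 c2 = (2 * t + 1).+1].
Proof.
have Hn1 : (1 < n)%N by rewrite Hn; nia.
have hd : lee_dist (x + vecZ n 1 0 *m Gmat n t i) (x + vecZ n 0 0 *m Gmat n t i) = (2 * t + 1).+1.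
  rewrite /lee_dist opprD addrACA subrr add0r -mulmxBl vecZB code_vecZ.
  rewrite wt_vecZ_eq //; rewrite ?Hn; nia.
exists (x + vecZ n 1 0 *m Gmat n t i), (x + vecZ n 0 0 *m Gmat n t i); split => //;
  try exact: T_in.
by apply/negP => /eqP he; move: hd; rewrite he dist_self.
Qed.

Lemma card_T n t i (Hn : n = (2 * (t + 1) ^ 2)%N) (ht : (1 <= t)%N) (hi : (i <= t)%N)
  (x : 'rV['Z_n]_2) : (n <= #|translate x (lin_code (Gmat n t i))|)%N.
Proof.
have Hn1 : (1 < n)%N by rewrite Hn; nia.
have hnZ : n%:Z = 2 * (t + 1)%:Z * (t + 1)%:Z by rewrite Hn; lia.
pose f (p : 'I_(t + 1) * 'I_(2 * (t + 1))) :=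
  x + vecZ n ((p.1 : nat)%:Z - (p.2 : nat)%:Z) (p.2 : nat)%:Z *m Gmat n t i.
have finj : injective f.
  case=> [a b] [a' b']; rewrite /f /= => /addrI.
  rewrite !code_vecZ => /(vecZ_eq Hn1) [q1 [q2 []]].
  rewrite hnZ => e1 e2.
  have ha := ltn_ord a; have ha' := ltn_ord a'; have hb := ltn_ord b; have hb' := ltn_ord b'.
  have [] := @arith_injC (t + 1)%:Z i%:Z a b a' b' q1 q2; try lia.
  move=> /eqP; rewrite eqz_nat => /eqP ea /eqP; rewrite eqz_nat => /eqP eb.
  by congr pair; apply: val_inj.
apply: (@leq_trans #|[set f p | p in [set: 'I_(t + 1) * 'I_(2 * (t + 1))]]|).
  by rewrite card_imset // cardsT card_prod !card_ord Hn; lia.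
apply: subset_leq_card; apply/subsetP => c /imsetP [p _ ->].
exact: T_in.
Qed.

Lemma pack n (Hn : (1 < n)%N) (T B : {set 'rV['Z_n]_2}) (D : nat) :
  (forall c1 c2, c1 \in T -> c2 \in T -> c1 != c2 -> (D < lee_dist c1 c2)%N) ->
  diam_le B D -> (#|T| * #|B| <= #|[set: 'rV['Z_n]_2]|)%N.
Proof.
move=> hT hB.
rewrite -cardsX.
have finj : {in setX T B &, injective (fun p : 'rV['Z_n]_2 * 'rV['Z_n]_2 => p.1 + p.2)}.
  case=> [c b] [c' b'] /setXP [hc hb] /setXP [hc' hb'] /= he.
  have ec : c = c'.
    apply/eqP; apply/negPn/negP => hne.
    have := hT _ _ hc hc' hne.
    have -> : lee_dist c c' = lee_dist b' b.
      have := congr1 (fun z => z - b - c') he.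
      by rewrite /= addrK addrAC [c' + b']addrC addrK /lee_dist => ->.
    by rewrite ltnNge hB.
  by subst c'; move/addrI: he => ->.
rewrite -(card_in_imset finj).
by apply: subset_leq_card; apply: subsetT.
Qed.

Lemma arith_E (E0 E1 X Y : int) : (absz E0 + absz E1 = 1)%N ->
  (absz (X * E0 + Y * E1) = absz X /\ absz (X * E1 + Y * E0) = absz Y) \/
  (absz (X * E0 + Y * E1) = absz Y /\ absz (X * E1 + Y * E0) = absz X).
Proof.
move=> h.
have : (E0 = 1 /\ E1 = 0) \/ (E0 = -1 /\ E1 = 0) \/ (E0 = 0 /\ E1 = 1) \/ (E0 = 0 /\ E1 = -1) by lia.
case=> [[-> ->]|[[-> ->]|[[-> ->]|[-> ->]]]]; lia.
Qed.

Definition ptA n (p1 : 'rV['Z_n]_2) (E0 E1 X Y : int) : 'rV['Z_n]_2 :=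
  p1 + vecZ n (X * E0 + Y * E1) (X * E1 + Y * E0).

Lemma ptA_dist n (Hn : (1 < n)%N) (p1 : 'rV['Z_n]_2) E0 E1 X Y X' Y' : (absz E0 + absz E1 = 1)%N ->
  (2 * absz (X - X') <= n)%N -> (2 * absz (Y - Y') <= n)%N ->
  lee_dist (ptA p1 E0 E1 X Y) (ptA p1 E0 E1 X' Y') = (absz (X - X') + absz (Y - Y'))%N.
Proof.
move=> hE hX hY.
rewrite /lee_dist /ptA opprD addrACA subrr add0r vecZB.
have -> : X * E0 + Y * E1 - (X' * E0 + Y' * E1) = (X - X') * E0 + (Y - Y') * E1 by ring.
have -> : X * E1 + Y * E0 - (X' * E1 + Y' * E0) = (X - X') * E1 + (Y - Y') * E0 by ring.
case: (arith_E (X - X') (Y - Y') hE) => [[h1 h2]|[h1 h2]].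
  by rewrite wt_vecZ_eq // ?h1 ?h2.
by rewrite wt_vecZ_eq // ?h1 ?h2 // addnC.
Qed.

Lemma ptA00 n (p1 : 'rV['Z_n]_2) E0 E1 : ptA p1 E0 E1 0 0 = p1.
Proof.
rewrite /ptA !mul0r addr0.
have -> : vecZ n 0 0 = 0 by apply: row2P; rewrite !mxE.
by rewrite addr0.
Qed.

Lemma ptA10 n (Hn : (1 < n)%N) (p1 p2 : 'rV['Z_n]_2) :
  ptA p1 (rep ((p2 - p1) ord0 ord0)) (rep ((p2 - p1) ord0 i1)) 1 0 = p2.
Proof.
rewrite /ptA !mul1r !mul0r !addr0 -vec_eta //.
by rewrite addrC subrK.
Qed.

Lemma E_norm n (Hn : (1 < n)%N) (p1 p2 : 'rV['Z_n]_2) : lee_dist p1 p2 = 1%N ->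
  (absz (rep ((p2 - p1)%R ord0 ord0)) + absz (rep ((p2 - p1)%R ord0 i1)) = 1)%N.
Proof. by rewrite dist_sym // /lee_dist wt_rep. Qed.

Lemma diam_A n t (Hn : (1 < n)%N) (p1 p2 : 'rV['Z_n]_2) : lee_dist p1 p2 = 1%N ->
  diam_le (anticodeA t p1 p2) (2 * t + 1).
Proof.
move=> hp a b; rewrite !inE.
have hp' : lee_dist p2 p1 = 1%N by rewrite dist_sym.
have key (pa pb : 'rV['Z_n]_2) : (lee_dist pa pb <= 1)%N ->
    (lee_dist a pa <= t)%N -> (lee_dist b pb <= t)%N -> (lee_dist a b <= 2 * t + 1)%N.
  move=> h1 h2 h3; rewrite dist_sym // in h3.
  apply: leq_trans (dist_tri Hn a pa b) _.
  have := dist_tri Hn pa pb b; lia.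
case/orP=> ha /orP [] hb.
- by apply: (key p1 p1) => //; rewrite dist_self.
- by apply: (key p1 p2) => //; rewrite hp.
- by apply: (key p2 p1) => //; rewrite hp'.
- by apply: (key p2 p2) => //; rewrite dist_self.
Qed.

Lemma A_facts n t (Hn : n = (2 * (t + 1) ^ 2)%N) (ht : (1 <= t)%N)
  (p1 p2 : 'rV['Z_n]_2) : lee_dist p1 p2 = 1%N ->
  (exists a b, [/\ a \in anticodeA t p1 p2, b \in anticodeA t p1 p2 &
                   lee_dist a b = (2 * t + 1)%N]) /\
  (n <= #|anticodeA t p1 p2|)%N.
Proof.
have Hn1 : (1 < n)%N by rewrite Hn; nia.
move=> hp.
set E0 := rep ((p2 - p1) ord0 ord0); set E1 := rep ((p2 - p1) ord0 i1).
have hE : (absz E0 + absz E1 = 1)%N by apply: E_norm.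
have h00 := ptA00 p1 E0 E1.
have h10 : ptA p1 E0 E1 1 0 = p2 by apply: ptA10.
have inA X Y : ((absz X + absz Y <= t)%N \/ (absz (X - 1) + absz Y <= t)%N) ->
    (absz X <= t + 1)%N -> (absz Y <= t)%N ->
    ptA p1 E0 E1 X Y \in anticodeA t p1 p2.
  move=> h hX hY; rewrite inE.
  case: h => h; apply/orP; [left|right].
    by rewrite -[Z in lee_dist _ Z]h00 ptA_dist // ?Hn; lia.
  by rewrite -[Z in lee_dist _ Z]h10 ptA_dist // ?Hn; lia.
split.
  exists (ptA p1 E0 E1 (- t%:Z) 0), (ptA p1 E0 E1 (t + 1)%:Z 0); split.
  - by apply: inA; lia.
  - by apply: inA; lia.
  - rewrite ptA_dist // ?Hn; try lia.
pose g (p : ('I_(t + 1) * 'I_(t + 1)) * bool) :=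
  ptA p1 E0 E1 ((p.1.1 : nat)%:Z + (p.1.2 : nat)%:Z + (p.2 : nat)%:Z - t%:Z)
     ((p.1.1 : nat)%:Z - (p.1.2 : nat)%:Z).
have ginj : injective g.
  case=> [[j k] e] [[j' k'] e'] /= he.
  have hj := ltn_ord j; have hk := ltn_ord k; have hj' := ltn_ord j'; have hk' := ltn_ord k'.
  have := dist_self Hn1 (g ((j, k), e)).
  rewrite {2}/g he /g /= ptA_dist //; clear he; last 2 first.
  - by rewrite Hn; case: e; case: e'; lia.
  - by rewrite Hn; lia.
  move=> h0.
  have [ej ek] : (j : nat) = j' /\ (k : nat) = k' by case: e h0; case: e'; lia.
  have ee : e = e' by move: h0; rewrite ej ek; case: e; case: e'; lia.
  by rewrite ee; congr (_, _); congr (_, _); apply: val_inj.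
apply: (@leq_trans #|[set g p | p in [set: ('I_(t + 1) * 'I_(t + 1)) * bool]]|).
  by rewrite card_imset // cardsT !card_prod !card_ord card_bool Hn; lia.
apply: subset_leq_card; apply/subsetP => c /imsetP [[[j k] e] _ ->].
have hj := ltn_ord j; have hk := ltn_ord k.
by apply: inA; case: e => /=; lia.
Qed.
End Helpers.
Import Helpers.
Theorem mainTheorem1 (t i n : nat) :
  (1 <= t)%N -> (i <= t)%N -> n = (2 * (t + 1) ^ 2)%N ->
  forall (x p1 p2 : 'rV['Z_n]_2), lee_dist p1 p2 = 1%N ->
    diameter_perfect (translate x (lin_code (Gmat n t i))) (2 * t + 1)
      (anticodeA t p1 p2).
Proof.
move=> ht hi Hn x p1 p2 hp.
have Hn1 : (1 < n)%N by rewrite Hn; nia.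
have hmin := @T_mindist n t i Hn ht hi x.
have [[a [b [ha hb hab]]] cardA] := A_facts Hn ht hp.
have cardT := card_T Hn ht hi x.
have hdiam := @diam_A n t Hn1 p1 p2 hp.
have hN : #|[set: 'rV['Z_n]_2]| = (n * n)%N.
  rewrite cardsT card_mx card_ord Zp_cast //; lia.
have hpack := pack Hn1 hmin hdiam.
have eqTA : (#|translate x (lin_code (Gmat n t i))| * #|anticodeA t p1 p2|)%N = #|[set: 'rV['Z_n]_2]|.
  by apply/eqP; rewrite eqn_leq hpack hN leq_mul.
split => //.
- split; first exact: T_pair.
  by move=> c1 c2 h1 h2 hne; apply: hmin.
- by split => //; exists a, b.
- move=> B hB; have := pack Hn1 hmin hB.
  rewrite -eqTA leq_pmul2l //.
  by apply: leq_trans cardT; lia.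
Qed.
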